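(* Let $R$ be a supertropical semiring such that $eR$ is a semifield with $\mathcal G\neq\{e\}$, let $(q,b)$ be a quadratic pair on an $R$-module $V$, and let $x,y,w\in V$ be anisotropic vectors (so that $x+y$ is also anisotropic). Then: (a) $\operatorname{CS}(x+y,w)\le \operatorname{CS}(x,w)+\operatorname{CS}(y,w)$ in $eR$. (b) If $q(x+y)\not\cong_\nu q(x)+q(y)$ and $\operatorname{CS}(x,w)+\operatorname{CS}(y,w)\neq 0$, then $\operatorname{CS}(x+y,w)<\operatorname{CS}(x,w)+\operatorname{CS}(y,w)$. (c) If $q(x+y)\cong_\nu q(x)+q(y)$ and at least one of the following holds: (c1) $e q(x)\cdot\operatorname{CS}(y,w)=eq(y)\cdot\operatorname{CS}(x,w)$; (c2) $\operatorname{CS}(x,w)=\operatorname{CS}(y,w)$; (c3) $q(x)\cong_\nu q(y)$; then $\operatorname{CS}(x+y,w)=\operatorname{CS}(x,w)+\operatorname{CS}(y,w)$.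
   Context: All semirings are commutative with $1$. A semiring $R$ is supertropical if $e:=1+1$ satisfies $e+e=e$ and, for all $x,y\in R$: if $ex\neq ey$ then $x+y\in\{x,y\}$, and if $ex=ey$ then $x+y=ey$. $eR$ is totally ordered by $u\le v\iff u+v=v$; write $x\le_\nu y$, $x\cong_\nu y$, $x<_\nu y$ for $ex\le ey$, $ex=ey$, $ex<ey$. $\mathcal G=eR\setminus\{0\}$; ''$eR$ is a semifield'' means every element of $\mathcal G$ is invertible in $eR$. A quadratic form on an $R$-module $V$ is a map $q:V\to R$ with $q(ax)=a^2q(x)$ such that some symmetric bilinear $b$ satisfies $q(x+y)=q(x)+q(y)+b(x,y)$; $(q,b)$ is a quadratic pair. A vector $x\in V$ is anisotropic if $x\ne0$ and $q(x)\neq 0$. For anisotropic $x,y$, the CS-ratio is $\operatorname{CS}(x,y):=\dfrac{e\,b(x,y)^2}{e\,q(x)q(y)}\in eR$ (quotient in the semifield $eR$). *)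

(* Defs.v *)
From HB Require Import structures.
From mathcomp Require Import all_boot all_order all_algebra.
From Stdlib Require Import ClassicalEpsilon.
Set Implicit Arguments. Unset Strict Implicit. Unset Printing Implicit Defensive.
Import GRing.Theory.
Local Open Scope ring_scope.

Section Supertropical.
Variable R : comPzSemiRingType.

Definition st_e : R := 1 + 1.

Definition supertropical : Prop :=
  st_e + st_e = st_e /\
  (forall x y : R,
     (st_e * x <> st_e * y -> x + y = x \/ x + y = y) /\
     (st_e * x = st_e * y -> x + y = st_e * y)).

Definition e_le (u v : R) : Prop := u + v = v.
Definition e_lt (u v : R) : Prop := e_le u v /\ u <> v.

Definition nu_le (x y : R) : Prop := e_le (st_e * x) (st_e * y).
Definition nu_cong (x y : R) : Prop := st_e * x = st_e * y.

(* eR is a semifield: every nonzero element of eR is invertible in eR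
   (the unit of the multiplicative monoid eR is e). *)
Definition eR_semifield : Prop :=
  forall a : R, st_e * a <> 0 ->
    exists c : R, (st_e * a) * (st_e * c) = st_e.

Definition G_ne_e : Prop :=
  exists a : R, st_e * a <> 0 /\ st_e * a <> st_e.

(* inverse in eR (chosen; unique when it exists) *)
Definition e_inv (a : R) : R :=
  epsilon (inhabits 0)
    (fun c => (exists d, c = st_e * d) /\ (st_e * a) * c = st_e).

Definition e_div (u v : R) : R := u * e_inv v.

Variable V : lSemiModType R.

Definition quadratic_pair (q : V -> R) (b : V -> V -> R) : Prop :=
  (forall (a : R) (x : V), q (a *: x) = a ^+ 2 * q x) /\
  (forall x y : V, b x y = b y x) /\
  (forall x y z : V, b (x + y) z = b x z + b y z) /\
  (forall (a : R) (x z : V), b (a *: x) z = a * b x z) /\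
  (forall x y : V, q (x + y) = q x + q y + b x y).

Definition anisotropic (q : V -> R) (x : V) : Prop := x <> 0 /\ q x <> 0.

Definition CS (q : V -> R) (b : V -> V -> R) (x y : V) : R :=
  e_div (st_e * b x y ^+ 2) (st_e * (q x * q y)).

End Supertropical.

(* Main.v *)
Require Import Defs.
From HB Require Import structures.
From mathcomp Require Import all_boot all_order all_algebra.
From Stdlib Require Import ClassicalEpsilon.
Import GRing.Theory.
Local Open Scope ring_scope.

Definition isE {R : comPzSemiRingType} (u : R) := st_e R * u = u.

Lemma ee {R : comPzSemiRingType} (hst : supertropical R) : st_e R * st_e R = st_e R.
Proof. case: hst => h _. by rewrite {1}/st_e mulrDl mul1r. Qed.

Lemma eE {R : comPzSemiRingType} (hst : supertropical R) u : isE (st_e R * u).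
Proof. by rewrite /isE mulrA ee. Qed.

Lemma addE {R : comPzSemiRingType} {u v : R} : isE u -> isE v -> isE (u + v).
Proof. by rewrite /isE mulrDr => -> ->. Qed.

Lemma mulE {R : comPzSemiRingType} {u v : R} : isE u -> isE (u * v).
Proof. by rewrite /isE mulrA => ->. Qed.

Lemma eadd {R : comPzSemiRingType} (u : R) : u + u = st_e R * u.
Proof. by rewrite /st_e mulrDl mul1r. Qed.

Lemma idem {R : comPzSemiRingType} (u : R) : isE u -> u + u = u.
Proof. by rewrite eadd. Qed.

Lemma e0 {R : comPzSemiRingType} (hst : supertropical R) (u : R) :
  st_e R * u = 0 -> u = 0.
Proof.
case: hst => _ h H. have [_ h2] := h u 0. rewrite mulr0 in h2.
by rewrite -[u]addr0; apply: h2.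
Qed.

Lemma emul {R : comPzSemiRingType} (hst : supertropical R) {u v : R} :
  st_e R * (u * v) = (st_e R * u) * (st_e R * v).
Proof.
by rewrite mulrACA ee.
Qed.

Lemma total {R : comPzSemiRingType} (hst : supertropical R) {u v : R} :
  isE u -> isE v -> e_le u v \/ e_le v u.
Proof.
rewrite /isE /e_le => Hu Hv. case: hst => _ h. have [h1 h2] := h u v.
case: (excluded_middle_informative (st_e R * u = st_e R * v)) => E.
  by left; rewrite h2 // Hv.
case: (h1 E) => H; [right; rewrite addrC|left] => //.
Qed.

Lemma le_trans {R : comPzSemiRingType} {u v w : R} :
  e_le u v -> e_le v w -> e_le u w.
Proof. rewrite /e_le => H1 H2. by rewrite -H2 addrA H1. Qed.

Lemma le_anti {R : comPzSemiRingType} {u v : R} :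
  e_le u v -> e_le v u -> u = v.
Proof. rewrite /e_le => H1 H2. by rewrite -H2 addrC H1. Qed.

Lemma le_refl {R : comPzSemiRingType} (u : R) : isE u -> e_le u u.
Proof. exact: idem. Qed.

Lemma le_mul {R : comPzSemiRingType} {u v t : R} :
  e_le u v -> e_le (u * t) (v * t).
Proof. rewrite /e_le => H. by rewrite -mulrDl H. Qed.

Lemma le_mull {R : comPzSemiRingType} {u v t : R} :
  e_le u v -> e_le (t * u) (t * v).
Proof. rewrite ![t * _]mulrC. exact: le_mul. Qed.

Lemma le_add {R : comPzSemiRingType} {u u' v v' : R} :
  e_le u u' -> e_le v v' -> e_le (u + v) (u' + v').
Proof. rewrite /e_le => H1 H2. by rewrite addrACA H1 H2. Qed.

Lemma le_addl {R : comPzSemiRingType} {u v : R} : isE u -> e_le u (u + v).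
Proof. rewrite /e_le => H. by rewrite addrA idem. Qed.

Lemma le_addr {R : comPzSemiRingType} {u v : R} : isE v -> e_le v (u + v).
Proof. rewrite addrC. exact: le_addl. Qed.

Lemma le_lub {R : comPzSemiRingType} {u v w : R} :
  e_le u w -> e_le v w -> e_le (u + v) w.
Proof. rewrite /e_le => H1 H2. by rewrite -addrA H2 H1. Qed.

Lemma le_addE {R : comPzSemiRingType} {u v : R} : e_le u v -> u + v = v.
Proof. by []. Qed.

Lemma le_addE' {R : comPzSemiRingType} {u v : R} : e_le u v -> v + u = v.
Proof. by rewrite addrC. Qed.

Lemma inv_spec {R : comPzSemiRingType} (hst : supertropical R) (hsf : eR_semifield R)
  (v : R) : st_e R * v <> 0 -> isE (e_inv v) /\ (st_e R * v) * e_inv v = st_e R.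
Proof.
move=> Hv. have [c Hc] := hsf v Hv.
have : (exists d, e_inv v = st_e R * d) /\ (st_e R * v) * e_inv v = st_e R.
  rewrite /e_inv; apply: (epsilon_spec (inhabits (0:R)) (fun c0 => (exists d, c0 = st_e R * d) /\ (st_e R * v) * c0 = st_e R)).
  by exists (st_e R * c); split => //; exists c.
by case=> [[d ->] H]; split => //; apply: eE.
Qed.

Lemma inv_specE {R : comPzSemiRingType} (hst : supertropical R) (hsf : eR_semifield R)
  {v : R} : isE v -> v <> 0 -> isE (e_inv v) /\ v * e_inv v = st_e R.
Proof. move=> Hv H0. have [h1 h2] := @inv_spec R hst hsf v (ltac:(by rewrite Hv)). by rewrite Hv in h2. Qed.

Lemma mul_ne0 {R : comPzSemiRingType} (hst : supertropical R) (hsf : eR_semifield R)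
  (u v : R) : isE u -> isE v -> u <> 0 -> v <> 0 -> u * v <> 0.
Proof.
move=> Hu Hv Hu0 Hv0 H. have [_ Hi] := inv_specE hst hsf Hu Hu0.
apply: Hv0. by rewrite -Hv -Hi mulrAC H mul0r.
Qed.

Lemma cancel_le {R : comPzSemiRingType} (hst : supertropical R) (hsf : eR_semifield R)
  (a u v : R) : isE a -> a <> 0 -> isE u -> isE v -> e_le (a * u) (a * v) -> e_le u v.
Proof.
move=> Ha Ha0 Hu Hv H. have [_ Hi] := inv_specE hst hsf Ha Ha0.
have := @le_mull _ _ _ (e_inv a) H. by rewrite !mulrA ![e_inv a * a]mulrC Hi Hu Hv.
Qed.

Lemma cancel_eq {R : comPzSemiRingType} (hst : supertropical R) (hsf : eR_semifield R)
  (a u v : R) : isE a -> a <> 0 -> isE u -> isE v -> a * u = a * v -> u = v.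
Proof.
move=> Ha Ha0 Hu Hv H. have [_ Hi] := inv_specE hst hsf Ha Ha0.
by rewrite -Hu -Hv -Hi (mulrAC a _ u) H mulrAC.
Qed.

Lemma inv_anti {R : comPzSemiRingType} (hst : supertropical R) (hsf : eR_semifield R)
  (D D' : R) : isE D -> isE D' -> D <> 0 -> D' <> 0 -> e_le D D' ->
  e_le (e_inv D') (e_inv D).
Proof.
move=> H H' H0 H0' Hle.
have [Hi Hs] := inv_specE hst hsf H H0. have [Hi' Hs'] := inv_specE hst hsf H' H0'.
have := @le_mul _ _ _ (e_inv D * e_inv D') Hle.
by rewrite mulrA Hs [e_inv D * _]mulrC mulrA Hs' Hi Hi'.
Qed.

Lemma inv_strict {R : comPzSemiRingType} (hst : supertropical R) (hsf : eR_semifield R)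
  (D D' : R) : isE D -> isE D' -> D <> 0 -> D' <> 0 -> e_lt D D' ->
  e_lt (e_inv D') (e_inv D).
Proof.
move=> H H' H0 H0' [Hle Hne]. split; first exact: inv_anti.
move=> E. apply: Hne.
have [Hi Hs] := inv_specE hst hsf H H0. have [Hi' Hs'] := inv_specE hst hsf H' H0'.
  by rewrite -H -Hs' E -mulrA (mulrC _ D) Hs mulrC H'.
Qed.

Lemma mul_strict {R : comPzSemiRingType} (hst : supertropical R) (hsf : eR_semifield R)
  (N u v : R) : isE N -> N <> 0 -> isE u -> isE v -> e_lt u v -> e_lt (N * u) (N * v).
Proof.
move=> HN HN0 Hu Hv [Hle Hne]. split; first exact: le_mull.
move=> E; apply: Hne; exact: cancel_eq E.
Qed.

Lemma sqE {R : comPzSemiRingType} (hst : supertropical R) (P Q : R) :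
  isE P -> isE Q -> (P + Q) * (P + Q) = P * P + Q * Q.
Proof.
move=> HP HQ. case: (total hst HP HQ) => H.
- rewrite (le_addE H). apply/esym/le_addE.
  apply: (le_trans (v := P * Q)); [exact: le_mull|exact: le_mul].
- rewrite (le_addE' H). apply/esym/le_addE'.
  apply: (le_trans (v := P * Q)); [exact: le_mul|exact: le_mull].
Qed.

Lemma esq {R : comPzSemiRingType} (hst : supertropical R) (p : R) :
  st_e R * p ^+ 2 = (st_e R * p) * (st_e R * p).
Proof. by rewrite expr2 emul. Qed.

Lemma sq_sum {R : comPzSemiRingType} (hst : supertropical R) (p r : R) :
  st_e R * (p + r) ^+ 2 = st_e R * p ^+ 2 + st_e R * r ^+ 2.
Proof. rewrite !(esq hst) mulrDr. by rewrite (sqE hst) //; apply: (eE hst). Qed.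

Lemma lt_sum1 {R : comPzSemiRingType} (hst : supertropical R) (X1 X2 Y1 Y2 : R) :
  isE X1 -> isE X2 -> isE Y1 -> isE Y2 ->
  e_le X1 Y1 -> e_le X2 Y2 -> (Y1 <> 0 -> X1 <> Y1) -> (Y2 <> 0 -> X2 <> Y2) ->
  e_le Y2 Y1 -> Y1 + Y2 <> 0 -> X1 + X2 <> Y1 + Y2.
Proof.
move=> H1 H2 H3 H4 L1 L2 N1 N2 L Hs. rewrite (le_addE' L) in Hs *.
case: (total hst H1 H2) => L'.
- rewrite (le_addE L') => E. subst X2.
  have E2 : Y2 = Y1 by apply: le_anti.
  by apply: (N2 _ (esym E2)); rewrite E2.
- by rewrite (le_addE' L'); apply: N1.
Qed.

Lemma lt_sum {R : comPzSemiRingType} (hst : supertropical R) (X1 X2 Y1 Y2 : R) :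
  isE X1 -> isE X2 -> isE Y1 -> isE Y2 ->
  e_le X1 Y1 -> e_le X2 Y2 -> (Y1 <> 0 -> X1 <> Y1) -> (Y2 <> 0 -> X2 <> Y2) ->
  Y1 + Y2 <> 0 -> e_lt (X1 + X2) (Y1 + Y2).
Proof.
move=> H1 H2 H3 H4 L1 L2 N1 N2 Hs. split; first exact: le_add.
case: (total hst H3 H4) => L.
- rewrite addrC [Y1 + _]addrC. apply: lt_sum1 => //. by rewrite addrC.
- exact: lt_sum1.
Qed.

Theorem theorem2 (R : comPzSemiRingType) (V : lSemiModType R)
    (q : V -> R) (b : V -> V -> R) (x y w : V)
    (hst : supertropical R) (hsf : eR_semifield R) (hG : G_ne_e R)
    (hqb : quadratic_pair q b)
    (hx : anisotropic q x) (hy : anisotropic q y) (hw : anisotropic q w)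
    (hxy : anisotropic q (x + y)) :
  (* (a) *)
  e_le (CS q b (x + y) w) (CS q b x w + CS q b y w) /\
  (* (b) *)
  (~ nu_cong (q (x + y)) (q x + q y) ->
     CS q b x w + CS q b y w <> 0 ->
     e_lt (CS q b (x + y) w) (CS q b x w + CS q b y w)) /\
  (* (c) *)
  (nu_cong (q (x + y)) (q x + q y) ->
     (st_e R * q x * CS q b y w = st_e R * q y * CS q b x w \/
      CS q b x w = CS q b y w \/
      nu_cong (q x) (q y)) ->
     CS q b (x + y) w = CS q b x w + CS q b y w).
Proof.
move: hqb => [hqs [hbs [hbD [hbZ hqD]]]].
have nz : forall v, anisotropic q v -> st_e R * q v <> 0.
  by move=> v [_ hv] E; apply: hv; apply: (e0 hst).
have eEx := eE hst.
have Ha := nz _ hx. have Hc := nz _ hy. have Hd := nz _ hw. have Hs := nz _ hxy.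
have Dnz : forall v, anisotropic q v -> st_e R * (q v * q w) <> 0.
  move=> v hv. rewrite (emul hst). apply: (mul_ne0 hst hsf) => //; exact: nz.
have Hs_eq : st_e R * q (x + y) = (st_e R * q x + st_e R * q y) + st_e R * b x y.
  by rewrite hqD !mulrDr.
have Lacs : e_le (st_e R * q x + st_e R * q y) (st_e R * q (x + y)).
  by rewrite Hs_eq; apply: le_addl; apply: addE; apply: eEx.
have Las : e_le (st_e R * q x) (st_e R * q (x + y)).
  apply: le_trans Lacs; apply: le_addl; exact: eEx.
have Lcs : e_le (st_e R * q y) (st_e R * q (x + y)).
  apply: le_trans Lacs; apply: le_addr; exact: eEx.
have hN3 : st_e R * b (x + y) w ^+ 2 = st_e R * b x w ^+ 2 + st_e R * b y w ^+ 2.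
  by rewrite hbD (sq_sum hst).
have -> : CS q b (x + y) w = (st_e R * b x w ^+ 2 + st_e R * b y w ^+ 2)
    * e_inv (st_e R * (q (x + y) * q w)) by rewrite /CS /e_div -hN3.
rewrite /CS /e_div.
have L13 : e_le (st_e R * (q x * q w)) (st_e R * (q (x + y) * q w)).
  by rewrite !(emul hst); apply: le_mul.
have L23 : e_le (st_e R * (q y * q w)) (st_e R * (q (x + y) * q w)).
  by rewrite !(emul hst); apply: le_mul.
have [I1 _] := inv_specE hst hsf (eEx _) (Dnz _ hx).
have [I2 _] := inv_specE hst hsf (eEx _) (Dnz _ hy).
have [I3 _] := inv_specE hst hsf (eEx _) (Dnz _ hxy).
set N1 := st_e R * b x w ^+ 2. set N2 := st_e R * b y w ^+ 2.
set i1 := e_inv (st_e R * (q x * q w)).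
set i2 := e_inv (st_e R * (q y * q w)).
set i3 := e_inv (st_e R * (q (x + y) * q w)).
have EN1 : isE N1 by apply: eEx.
have EN2 : isE N2 by apply: eEx.
have A13 : e_le i3 i1 by apply: (inv_anti hst hsf) => //; apply: Dnz.
have A23 : e_le i3 i2 by apply: (inv_anti hst hsf) => //; apply: Dnz.
split.
  rewrite mulrDl; apply: le_add; exact: le_mull.
split.
  move=> hn hne.
  have Lt : e_lt (st_e R * q x + st_e R * q y) (st_e R * q (x + y)).
    split => // E; apply: hn; by rewrite /nu_cong mulrDr E.
  have Lta : e_lt (st_e R * q x) (st_e R * q (x + y)).
    split => // E; apply: (proj2 Lt); apply: le_anti => //.
    rewrite -E; apply: le_addl; exact: eEx.
  have Ltc : e_lt (st_e R * q y) (st_e R * q (x + y)).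
    split => // E; apply: (proj2 Lt); apply: le_anti => //.
    rewrite -E; apply: le_addr; exact: eEx.
  have S13 : e_lt i3 i1.
    apply: (inv_strict hst hsf) => //; try apply: Dnz => //.
    rewrite !(emul hst) ![_ * (st_e R * q w)]mulrC; exact: (mul_strict hst hsf).
  have S23 : e_lt i3 i2.
    apply: (inv_strict hst hsf) => //; try apply: Dnz => //.
    rewrite !(emul hst) ![_ * (st_e R * q w)]mulrC; exact: (mul_strict hst hsf).
  rewrite mulrDl; apply: (lt_sum hst) => //; try (apply: mulE => //); try (apply: le_mull => //).
  - move=> hY. have hN : N1 <> 0 by move=> E; apply: hY; rewrite E mul0r.
    exact: (proj2 (@mul_strict _ hst hsf N1 i3 i1 EN1 hN I3 I1 S13)).
  - move=> hY. have hN : N2 <> 0 by move=> E; apply: hY; rewrite E mul0r.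
    exact: (proj2 (@mul_strict _ hst hsf N2 i3 i2 EN2 hN I3 I2 S23)).
move=> hc hcond.
have Es : st_e R * q (x + y) = st_e R * q x + st_e R * q y.
  by move: hc; rewrite /nu_cong mulrDr.
case: (total hst (eEx (q x)) (eEx (q y))) => Lac.
- have Ei : i3 = i2.
    by rewrite /i3 /i2 !(emul hst) Es (le_addE Lac).
  rewrite Ei in A13 *.
  have key : e_le (N1 * i1) (N2 * i2) \/ i1 = i2.
    case: hcond => [h1|[h2|h3]].
    + left. apply: (@cancel_le _ hst hsf (st_e R * q y)) => //; try (apply: mulE => //).
      rewrite -h1. exact: le_mul.
    + left; rewrite h2; apply: le_refl; exact: mulE.
    + right. by rewrite /i1 /i2 !(emul hst) h3.
  case: key => K.
  + rewrite mulrDl (le_addE K). apply: le_addE. apply: le_trans K. exact: le_mull.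
  + by rewrite K mulrDl.
- have Ei : i3 = i1.
    by rewrite /i3 /i1 !(emul hst) Es (le_addE' Lac).
  rewrite Ei in A23 *.
  have key : e_le (N2 * i2) (N1 * i1) \/ i1 = i2.
    case: hcond => [h1|[h2|h3]].
    + left. apply: (@cancel_le _ hst hsf (st_e R * q x)) => //; try (apply: mulE => //).
      rewrite h1. exact: le_mul.
    + left; rewrite h2; apply: le_refl; exact: mulE.
    + right. by rewrite /i1 /i2 !(emul hst) h3.
  case: key => K.
  + rewrite mulrDl (le_addE' K). apply: le_addE'. apply: le_trans K. exact: le_mull.
  + by rewrite -K mulrDl.
Qed.
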